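(* Let $G$ be a connected threshold graph of order $n\ge 4$ and size $m$ with $n-1<m<\binom{n}{2}$, let $c$ be its number of type 1 vertices, $(b_1,\ldots,b_z)$ its backwards zero position sequence, $F_1=\sum_{i=1}^z b_i^2$, and $\rho$ the spectral radius of its adjacency matrix. Then the greatest real root $\xi$ of the polynomial \[x^3-(c+1)x^2+\Big(c-\sum_{i=1}^z b_i\Big)x+\Big(c\sum_{i=1}^z b_i-F_1\Big)\] satisfies $\xi\ge 1+\rho$.
   Context: A threshold graph is a simple graph whose vertices can be ordered $v_1,\ldots,v_n$ so that for each $2\le i\le n$, $v_i$ is either adjacent to all of $v_1,\ldots,v_{i-1}$ (then $a_i=1$) or to none of them (then $a_i=0$); by convention $a_1=1$. Vertex $v_i$ is of type 1 if $a_i=1$ and of type 0 if $a_i=0$; $c$ and $z$ are the numbers of type 1 and type 0 vertices. The backwards zero position sequence $(b_1,\ldots,b_z)$ is defined by letting $b_i$ be the number of type 1 vertices appearing after the $i$-th type 0 vertex in the order $v_1,\ldots,v_n$. *)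

(* Defs.v *)
From mathcomp Require Import all_boot all_order all_algebra.
From mathcomp Require Import reals.
Set Implicit Arguments. Unset Strict Implicit. Unset Printing Implicit Defensive.
Import Order.TTheory GRing.Theory Num.Theory.

(* Threshold graph on vertices v_1..v_n, represented as 'I_n (v_{i+1} = i),
   given by its binary creation sequence a : 'I_n -> bool (a i = 1 iff type 1).
   Vertices i < j are adjacent iff a j (v_j joins to all earlier vertices). *)
Definition thr_adj (n : nat) (a : 'I_n -> bool) : rel 'I_n :=
  fun i j => ((i < j)%N && a j) || ((j < i)%N && a i).

Definition thr_size (n : nat) (a : 'I_n -> bool) : nat :=
  #|[set p : 'I_n * 'I_n | ((p.1 < p.2)%N && thr_adj a p.1 p.2)]|.

Definition thr_connected (n : nat) (a : 'I_n -> bool) : Prop :=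
  forall i j : 'I_n, connect (thr_adj a) i j.

Definition thr_c (n : nat) (a : 'I_n -> bool) : nat := #|[set i | a i]|.

Definition thr_b (n : nat) (a : 'I_n -> bool) (j : 'I_n) : nat :=
  #|[set k : 'I_n | (j < k)%N && a k]|.

Definition thr_sumb (n : nat) (a : 'I_n -> bool) : nat :=
  \sum_(j < n | ~~ a j) thr_b a j.

Definition thr_F1 (n : nat) (a : 'I_n -> bool) : nat :=
  \sum_(j < n | ~~ a j) (thr_b a j) ^ 2.

Local Open Scope ring_scope.

Definition thr_adjmx (R : realType) (n : nat) (a : 'I_n -> bool) : 'M[R]_n :=
  \matrix_(i, j) (thr_adj a i j)%:R.

(* spectral radius: r = max |lambda| over the eigenvalues lambda
   (the adjacency matrix is real symmetric, so all eigenvalues are real) *)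
Definition is_spectral_radius (R : realType) (n : nat) (A : 'M[R]_n) (r : R) : Prop :=
  (exists2 l, eigenvalue A l & `|l| = r) /\ (forall l, eigenvalue A l -> `|l| <= r).

Definition is_greatest_root (R : realType) (p : {poly R}) (x : R) : Prop :=
  root p x /\ (forall y, root p y -> y <= x).

(* Main.v *)
Require Import Defs.
From mathcomp Require Import all_boot all_order all_algebra.
From mathcomp Require Import reals.
From mathcomp Require Import complex polyrcf.
From mathcomp Require Import ring lra.
Import Order.TTheory GRing.Theory Num.Theory.
Local Open Scope ring_scope.

Section Ray.
Local Open Scope sesquilinear_scope.
Lemma rayleigh (R : rcfType) n (A : 'M[R]_n) (u : 'rV[R]_n) : A^T = A -> u != 0 ->
  exists l, eigenvalue A l /\ (u *m A *m u^T) 0 0 <= l * (u *m u^T) 0 0.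
Proof.
move=> Asym u0.
case: n A u Asym u0 => [|n] A u Asym u0; first by rewrite thinmx0 eqxx in u0.
pose f := real_complex R.
pose AC := map_mx f A.
have freal : forall x : R, f x \is Num.real by move=> x; apply/complex_realP; exists x.
have fconj : forall x : R, (f x)^* = f x by move=> x; apply: conj_Creal.
have ACh : AC \is hermsymmx.
  apply: realsym_hermsym.
    apply/is_hermitianmxP; rewrite expr0 scale1r map_mx_id //.
    by rewrite /AC map_trmx Asym.
  by apply/mxOverP => i j; rewrite mxE.
have /orthomx_spectralP AE := hermitian_normalmx ACh.
have Pu := spectral_unitarymx AC.
have dreal := hermitian_spectral_diag_real ACh.
move: AE Pu dreal; set P := spectralmx AC; set d := spectral_diag AC => AE Pu dreal.
have Punit : P \in unitmx by exact: unitarymx_unit.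
have dR : forall j, d 0 j = f (complex.Re (d 0 j)).
  by move=> j; rewrite /f complexRe; apply/esym/Creal_ReP/(mxOverP dreal).
case: (@arg_maxP _ _ _ (ord0 : 'I_n.+1) predT (fun j => complex.Re (d 0 j)) isT) => k _ kmax.
exists (complex.Re (d 0 k)); split.
  suff eC : eigenvalue AC (d 0 k).
    move: eC; rewrite eigenvalue_root_char dR -map_char_poly fmorph_root.
    by rewrite -eigenvalue_root_char.
  apply/eigenvalueP; exists (row k P); last first.
    apply/negP => /eqP r0.
    have : row k P *m invmx P = 0 by rewrite r0 mul0mx.
    rewrite rowE mulmxK // => /matrixP /(_ 0 k); rewrite !mxE !eqxx /=.
    by move/eqP; rewrite oner_eq0.
  rewrite rowE AE !mulmxA mulmxK // -(rowE k (diag_mx d)) row_diag_mx scalemxAl.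
  by [].
pose uC := u ^ f.
have uCc : uC ^t* = uC^T by apply/matrixP => i j; rewrite !mxE fconj.
have e1 : f ((u *m A *m u^T) 0 0) = (uC *m AC *m uC ^t*) 0 0.
  by rewrite uCc map_trmx -!map_mxM [RHS]mxE.
have e2 : f ((u *m u^T) 0 0) = (uC *m uC ^t*) 0 0.
  by rewrite uCc map_trmx -!map_mxM [RHS]mxE.
have PP : P ^t* *m P = 1%:M by apply: mulmx1C; apply/unitarymxP.
pose w := uC *m P ^t*.
have wE : w ^t* = P *m uC ^t*.
  by rewrite /w trmx_mul map_mxM trmxCK.
have e3 : uC *m AC *m uC ^t* = w *m diag_mx d *m w ^t*.
  by rewrite wE AE invmx_unitary // !mulmxA.
have e4 : uC *m uC ^t* = w *m w ^t*.
  by rewrite wE !mulmxA -(mulmxA uC) PP mulmx1.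
have fM : forall a b : R, f (a * b) = f a * f b by move=> a b; exact: rmorphM.
rewrite -lecR -/f fM -dR e1 e2 e3 e4 mul_mx_diag !mxE mulr_sumr.
apply: ler_sum => j _; rewrite !mxE.
rewrite mulrAC mulrC; apply: ler_wpM2r; first exact: mul_conjC_ge0.
have h : complex.Re (d 0 j) <= complex.Re (d 0 k) := kmax j isT.
by rewrite [d 0 j]dR [d 0 k]dR lecR.
Qed.

End Ray.
Lemma bmul (R : pzRingType) (b1 b2 : bool) : (b1%:R * b2%:R : R) = (b1 && b2)%:R.
Proof. by case: b1; case: b2; rewrite /= ?(mulr1n, mulr0n, mulr1, mulr0). Qed.

Lemma sum_ind (R : pzRingType) (T : finType) (P : pred T) :
  \sum_(i : T) (P i)%:R = (#|[set i | P i]|)%:R :> R.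
Proof.
rewrite -sum1_card natr_sum [RHS]big_mkcond /=; apply: eq_bigr => i _.
by rewrite inE; case: (P i).
Qed.

Lemma bool_ge0 (R : numDomainType) (b : bool) : 0 <= (b%:R : R).
Proof. by case: b. Qed.

Lemma bool_le1 (R : numDomainType) (b : bool) : (b%:R : R) <= 1.
Proof. by case: b. Qed.

Section Key.
Variables (R : realType) (n : nat) (a : 'I_n -> bool) (w : 'I_n -> R) (r : R).
Hypotheses (r0 : 0 <= r) (rc : (thr_c a)%:R - 1 <= r) (c0 : (0 < thr_c a)%N)
  (w0 : forall j, 0 <= w j) (wnz : exists j, w j != 0)
  (H : forall j, r * w j <= \sum_i w i * (thr_adj a i j)%:R).

Let c : R := (thr_c a)%:R.
Let S : R := (thr_sumb a)%:R.
Let F : R := (thr_F1 a)%:R.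
Let bR (i : 'I_n) : R := (thr_b a i)%:R.
Let X := \sum_j w j * (a j)%:R.
Let Y (j : 'I_n) : R := \sum_i w i * (~~ a i && (i < j)%N)%:R.
Let W := \sum_i w i * ((~~ a i)%:R * bR i).

Lemma bE i : bR i = \sum_(k : 'I_n) ((i < k)%N && a k)%:R.
Proof. by rewrite sum_ind. Qed.

Lemma cE : c = \sum_j (a j)%:R.
Proof. by rewrite sum_ind. Qed.

Lemma SE : S = \sum_i (~~ a i)%:R * bR i.
Proof.
rewrite /S /thr_sumb natr_sum big_mkcond /=; apply: eq_bigr => i _.
by case: (a i); rewrite /= ?mul1r ?mul0r.
Qed.

Lemma FE : F = \sum_i (~~ a i)%:R * bR i ^+ 2.
Proof.
rewrite /F /thr_F1 natr_sum big_mkcond /=; apply: eq_bigr => i _.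
by case: (a i); rewrite /= ?mul1r ?mul0r ?natrX.
Qed.

Lemma X0 : 0 <= X.
Proof. by apply: sumr_ge0 => j _; rewrite mulr_ge0 ?bool_ge0. Qed.

Lemma Y0 j : 0 <= Y j.
Proof. by apply: sumr_ge0 => i _; rewrite mulr_ge0 ?bool_ge0. Qed.

Lemma W0 : 0 <= W.
Proof. by apply: sumr_ge0 => i _; rewrite !mulr_ge0 ?bool_ge0 ?ler0n. Qed.

Lemma P1 i j : a j -> (thr_adj a i j)%:R = (a i)%:R - (i == j)%:R + (~~ a i && (i < j)%N)%:R :> R.
Proof.
move=> aj; rewrite /thr_adj aj.
have -> : (i == j) = (nat_of_ord i == nat_of_ord j) by [].
case: (ltngtP i j) => h; last first.
  have e : i = j := val_inj h; subst i; rewrite aj /= ?(mulr1n, mulr0n); lra.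
all: by case: (a i); rewrite /= ?(mulr1n, mulr0n); lra.
Qed.

Lemma P2 k i : ~~ a i -> (thr_adj a k i)%:R = ((i < k)%N && a k)%:R :> R.
Proof. by move=> ai; rewrite /thr_adj (negbTE ai) andbF. Qed.

Lemma I1 j : a j -> (r + 1) * w j <= X + Y j.
Proof.
move=> aj; have := H j.
have -> : \sum_i w i * (thr_adj a i j)%:R = X - w j + Y j.
  rewrite (eq_bigr (fun i => w i * (a i)%:R - w i * (i == j)%:R
                + w i * (~~ a i && (i < j)%N)%:R)); last first.
    by move=> i _; rewrite P1 // mulrDr mulrBr.
  rewrite big_split sumrB /=; congr (_ - _ + _).
  rewrite (bigD1 j) //= eqxx mulr1 big1 ?addr0 // => i /negbTE ->.
  by rewrite mulr0.
lra.
Qed.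

Lemma EW : \sum_j Y j * (a j)%:R = W.
Proof.
rewrite /W /Y.
under eq_bigr => j _ do rewrite mulr_suml.
rewrite exchange_big /=; apply: eq_bigr => i _.
rewrite bE mulr_sumr mulr_sumr; apply: eq_bigr => k _.
rewrite -mulrA; congr (_ * _).
by case: (a i); case: (a k); case: (i < k)%N; rewrite /= ?(mulr1n, mulr0n, mulr1, mulr0).
Qed.

Lemma I2 : (r + 1) * X <= c * X + W.
Proof.
rewrite -EW cE mulr_suml mulr_sumr -big_split /=.
apply: ler_sum => j _; rewrite mulrA.
case E: (a j) => /=; last by rewrite !mulr0 mul0r addr0.
by rewrite !mulr1 mul1r; have := @I1 j E; lra.
Qed.

Lemma I3 i : ~~ a i -> r * w i <= \sum_k w k * ((i < k)%N && a k)%:R.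
Proof.
move=> ai.
have -> : \sum_k w k * ((i < k)%N && a k)%:R = \sum_k w k * (thr_adj a k i)%:R.
  by apply: eq_bigr => k _; rewrite P2.
exact: H.
Qed.

Lemma I3' i : ~~ a i -> (r + 1) * r * w i <= bR i * X + W.
Proof.
move=> ai.
apply: (@le_trans _ _ ((r + 1) * \sum_k w k * ((i < k)%N && a k)%:R)).
  by rewrite -mulrA; apply: ler_wpM2l; [rewrite addr_ge0 | exact: I3].
rewrite -[W]EW bE mulr_suml mulr_sumr -big_split /=; apply: ler_sum => k _.
have := Y0 k; have := w0 k.
case E: (a k); rewrite /= ?andbT ?andbF.
  have := @I1 k E.
  by case: (i < k)%N; rewrite /= ?(mulr1n, mulr0n, mulr1, mulr0, mul1r, mul0r); lra.
by rewrite ?(mulr1n, mulr0n, mulr1, mulr0, mul1r, mul0r); lra.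
Qed.

Lemma I4 : (r + 1) * r * W <= F * X + S * W.
Proof.
rewrite /W FE SE mulr_sumr !mulr_suml -big_split /=; apply: ler_sum => i _.
case E: (a i); rewrite /= ?(mulr1n, mulr0n, mulr1, mulr0, mul1r, mul0r).
  by rewrite addr0.
rewrite -/W.
have hb : 0 <= bR i by rewrite ler0n.
have h := ler_wpM2l hb (@I3' i (negbT E)).
nra.
Qed.

Lemma key : (r ^+ 2 + r - S) * (r + 1 - c) <= F.
Proof.
have F0 : 0 <= F by rewrite ler0n.
have c1 : 1 <= c by rewrite /c ler1n.
have hD : 0 <= r + 1 - c by move: rc; rewrite -/c; lra.
have [D0|Dn0] := eqVneq (r + 1 - c) 0; first by rewrite D0 mulr0.
have Dpos : 0 < r + 1 - c by rewrite lt_def Dn0 hD.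
have rpos : 0 < r by lra.
have Wpos : 0 < W.
  rewrite lt_def W0 andbT; apply/eqP => Wz.
  have XD : (r + 1 - c) * X <= 0 by have := I2; rewrite Wz; lra.
  have Xz : X = 0 by apply/le_anti; rewrite X0 andbT -(pmulr_rle0 _ Dpos).
  have wa : forall j, a j -> w j = 0.
    move=> j aj.
    have := @psumr_eq0P _ _ predT (fun j => w j * (a j)%:R)
      (fun k _ => mulr_ge0 (w0 k) (bool_ge0 _ _)) Xz j isT.
    by rewrite aj mulr1.
  case: wnz => j0 /negP; apply; apply/eqP.
  case E: (a j0); first by rewrite wa.
  have := @I3 j0 (negbT E).
  rewrite big1; last first.
    by move=> k _; case Ek: (a k); [rewrite (wa k Ek) mul0r | rewrite andbF mulr0].
  move=> h; apply/le_anti; rewrite w0 andbT.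
  by rewrite -(pmulr_rle0 _ rpos).
have h2 := I2; have h4 := I4.
nra.
Qed.

End Key.

Theorem theorem5p1 (R : realType) (n : nat) (a : 'I_n -> bool)
  (ha1 : forall i : 'I_n, nat_of_ord i = 0%N -> a i)
  (hn : (4 <= n)%N)
  (hconn : thr_connected a)
  (hm1 : (n.-1 < thr_size a)%N)
  (hm2 : (thr_size a < 'C(n, 2))%N)
  (rho xi : R)
  (hrho : is_spectral_radius (thr_adjmx R a) rho)
  (hxi : is_greatest_root
           ('X^3 - ((thr_c a)%:R + 1) *: 'X^2
            + ((thr_c a)%:R - (thr_sumb a)%:R) *: 'X
            + ((thr_c a)%:R * (thr_sumb a)%:R - (thr_F1 a)%:R)%:P) xi) :
  1 + rho <= xi.
Proof.
set A := thr_adjmx R a.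
have Asym : A^T = A.
  by apply/matrixP => i j; rewrite !mxE /thr_adj orbC.
have n0 : (0 < n)%N by apply: leq_trans hn.
pose i0 : 'I_n := Ordinal n0.
have ai0 : a i0 by apply: ha1.
have c0 : (0 < thr_c a)%N.
  by rewrite /thr_c card_gt0; apply/set0Pn; exists i0; rewrite inE.
set c : R := (thr_c a)%:R.
have cpos : 0 < c by rewrite ltr0n.
have rc : c - 1 <= rho.
  pose u : 'rV[R]_n := \row_i (a i)%:R.
  have u0 : u != 0.
    apply/negP => /eqP /matrixP /(_ 0 i0); rewrite !mxE ai0 /=.
    by move/eqP; rewrite oner_eq0.
  have [l [el hl]] := @rayleigh R _ A u Asym u0.
  have uu : (u *m u^T) 0 0 = c.
    rewrite mxE /c /thr_c -sum_ind; apply: eq_bigr => j _; rewrite !mxE.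
    by case: (a j); rewrite /= ?(mulr1n, mulr0n, mulr1, mulr0).
  have uAu : (u *m A *m u^T) 0 0 = (c - 1) * c.
    rewrite mxE /c /thr_c -sum_ind mulr_sumr; apply: eq_bigr => j _; rewrite !mxE.
    case E: (a j); rewrite /= ?(mulr1n, mulr0n, mulr1, mulr0) //.
    rewrite -/c (eq_bigr (fun i => (a i)%:R - (i == j)%:R)); last first.
      move=> i _; rewrite !mxE P1 //.
      case: (eqVneq i j) => [->|ne]; first by rewrite E /= ?(mulr1n, mulr0n, mulr1, mulr0); lra.
      by case: (a i); rewrite /= ?(mulr1n, mulr0n, mulr1, mulr0, mul0r, mul1r); lra.
    rewrite sumrB sum_ind (bigD1 j) //= eqxx big1 ?addr0 //.
    by move=> i /negbTE ->.
  rewrite uu uAu in hl.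
  have := hrho.2 l el.
  have : c - 1 <= l by rewrite -(ler_pM2r cpos).
  have := real_ler_norm (num_real l).
  lra.
have [l0 el0 hl0] := hrho.1.
have rho0 : 0 <= rho by rewrite -hl0.
have [v vA vnz] := eigenvalueP el0.
pose w := fun j => `|v 0 j|.
have hq : (rho ^+ 2 + rho - (thr_sumb a)%:R) * (rho + 1 - c) <= (thr_F1 a)%:R.
  apply: (@key R n a w rho rho0 rc c0).
  - by move=> j; exact: normr_ge0.
  - case: (pickP (fun j => v 0 j != 0)) => [j hj | hall].
      by exists j; rewrite /w normr_eq0.
    move/negP: vnz; case; apply/eqP/matrixP => i j.
    by rewrite ord1 !mxE; move: (hall j) => /negbFE/eqP.
  - move=> j; rewrite /w -hl0 -normrM.
    have := congr1 (fun M : 'rV[R]_n => M 0 j) vA; rewrite !mxE => <-.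
    apply: le_trans (ler_norm_sum _ _ _) _.
    by apply: ler_sum => i _; rewrite !mxE normrM normr_nat.
set S : R := (thr_sumb a)%:R in hq hxi.
set F : R := (thr_F1 a)%:R in hq hxi.
set p := ('X^3 - (c + 1) *: 'X^2 + (c - S) *: 'X + (c * S - F)%:P) in hxi.
have pa : p.[1 + rho] <= 0.
  have -> : p.[1 + rho] = (rho ^+ 2 + rho - S) * (rho + 1 - c) - F.
    rewrite /p !(hornerD, hornerN, hornerZ, hornerXn, hornerX, hornerC). ring.
  lra.
pose M := 1 + `|c + 1| + `|c - S| + `|c * S - F|.
pose b := 1 + rho + M.
have pb : 0 <= p.[b].
  rewrite /p !(hornerD, hornerN, hornerZ, hornerXn, hornerX, hornerC).
  set al := c + 1; set be := c - S; set ga := c * S - F.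
  have na := normr_ge0 al; have nb := normr_ge0 be; have ng := normr_ge0 ga.
  have b1 : 1 <= b by rewrite /b /M -/al -/be -/ga; lra.
  have bM : `|al| + `|be| + `|ga| <= b - 1 by rewrite /b /M -/al -/be -/ga; lra.
  have ha : al <= `|al| := ler_norm al.
  have hb : - `|be| <= be by have := ler_norm (- be); rewrite normrN; lra.
  have hg : - `|ga| <= ga by have := ler_norm (- ga); rewrite normrN; lra.
  have b0 : 0 <= b by lra.
  have bb : b <= b ^+ 2 by rewrite expr2; nra.
  have bb1 : 1 <= b ^+ 2 by lra.
  have e1 : al * b ^+ 2 <= `|al| * b ^+ 2 := ler_wpM2r (sqr_ge0 b) ha.
  have e2 : - `|be| * b <= be * b := ler_wpM2r b0 hb.
  have e3 : `|be| * b <= `|be| * b ^+ 2 := ler_wpM2l nb bb.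
  have e4 : `|ga| * 1 <= `|ga| * b ^+ 2 := ler_wpM2l ng bb1.
  have e5 : (`|al| + `|be| + `|ga|) * b ^+ 2 <= (b - 1) * b ^+ 2 := ler_wpM2r (sqr_ge0 b) bM.
  have e6 : b ^+ 3 = b * b ^+ 2 by ring.
  rewrite e6.
  have := sqr_ge0 b.
  lra.
have le_ab : 1 + rho <= b.
  by rewrite /b /M; have := normr_ge0 (c + 1); have := normr_ge0 (c - S); have := normr_ge0 (c * S - F); lra.
have pab : p.[1 + rho] <= 0 <= p.[b] by rewrite pa pb.
have [x xin rx] := poly_ivt le_ab pab.
have := hxi.2 x rx.
move: xin => /andP [h1 _].
lra.
Qed.
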